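(* Let $\Sigma=(X,\mathcal D,\phi)$ be a (forward complete) system and let $\mathcal A\subset X$ be bounded. If there exists a non-coercive Lyapunov function $V$ for $\Sigma$ with respect to $\mathcal A$, then $\mathcal A$ is uniformly globally weakly attractive.
   Context: $\mathbb R_+=[0,\infty)$. A system is a triple $\Sigma=(X,\mathcal D,\phi)$ where $(X,\|\cdot\|)$ is a normed linear space; $D$ is a nonempty subset of some normed linear space; $\mathcal D$ is a set of functions $d:\mathbb R_+\to D$ closed under time shifts $d\mapsto d(\cdot+\tau)$, $\tau\ge0$, and under concatenation ($d(s)=d_1(s)$ for $s\in[0,t]$, $d(s)=d_2(s-t)$ for $s>t$, any $d_1,d_2\in\mathcal D$, $t>0$); and $\phi:\mathbb R_+\times X\times\mathcal D\to X$ is an everywhere defined map (forward completeness) with $\phi(0,x,d)=x$; $\phi(t,x,d)=\phi(t,x,\tilde d)$ whenever $d=\tilde d$ on $[0,t]$; $t\mapsto\phi(t,x,d)$ continuous; and $\phi(h,\phi(t,x,d),d(t+\cdot))=\phi(t+h,x,d)$ for all $t,h\ge0$. $\|x\|_{\mathcal A}=\inf_{y\in\mathcal A}\|x-y\|$. $\mathcal K$: continuous strictly increasing $\gamma:\mathbb R_+\to\mathbb R_+$ with $\gamma(0)=0$; $\mathcal K_\infty$: unbounded elements of $\mathcal K$. For continuous $V:X\to\mathbb R$, $\dot V_d(x)=\liminf_{t\to0^+}\frac1t(V(\phi(t,x,d))-V(x))$. A continuous $V:X\to\mathbb R_+$ is a non-coercive Lyapunov function for $\Sigma$ w.r.t.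 $\mathcal A$ if $V(x)=0$ for $x\in\mathcal A$ and there are $\psi_2\in\mathcal K_\infty$, $\alpha\in\mathcal K$ with $0<V(x)\le\psi_2(\|x\|_{\mathcal A})$ and $\dot V_d(x)\le-\alpha(\|x\|_{\mathcal A})$ for all $x\in X\setminus\mathcal A$, $d\in\mathcal D$. $\mathcal A$ is uniformly globally weakly attractive if for all $\varepsilon,r>0$ there is $\tau$ such that for all $x$ with $\|x\|_{\mathcal A}\le r$ and all $d\in\mathcal D$ there exists $t\le\tau$ with $\|\phi(t,x,d)\|_{\mathcal A}\le\varepsilon$. *)

(* Defs.v *)
From HB Require Import structures.
From mathcomp Require Import all_boot all_order all_algebra.
From mathcomp Require Import all_classical all_reals all_analysis.
Set Implicit Arguments. Unset Strict Implicit. Unset Printing Implicit Defensive.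
Import Order.TTheory GRing.Theory Num.Theory.
Import numFieldNormedType.Exports.
Local Open Scope classical_set_scope.
Local Open Scope ring_scope.

(* A system Sigma = (X, Dcal, phi). Disturbances are modelled as functions
   R -> E (only their values on R_+ matter); Dcal is a set of such functions
   whose values on [0, oo) lie in Dset. *)
Definition is_system (R : realType) (X E : normedModType R)
  (Dset : set E) (Dcal : set (R -> E)) (phi : R -> X -> (R -> E) -> X) : Prop :=
  Dset !=set0 /\ Dcal !=set0 /\
  (forall d, Dcal d -> forall s, 0 <= s -> Dset (d s)) /\
  (forall d tau, Dcal d -> 0 <= tau -> Dcal (fun s => d (s + tau))) /\
  (forall d1 d2 t, Dcal d1 -> Dcal d2 -> 0 < t ->
     Dcal (fun s => if s <= t then d1 s else d2 (s - t))) /\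
  (forall x d, Dcal d -> phi 0 x d = x) /\
  (forall t x d d', Dcal d -> Dcal d' -> 0 <= t ->
     (forall s, 0 <= s <= t -> d s = d' s) -> phi t x d = phi t x d') /\
  (forall x d, Dcal d -> {within `[0, +oo[, continuous (fun t => phi t x d)}) /\
  (forall t h x d, Dcal d -> 0 <= t -> 0 <= h ->
     phi h (phi t x d) (fun s => d (t + s)) = phi (t + h) x d).

Definition dist_set (R : realType) (X : normedModType R) (A : set X) (x : X) : R :=
  inf [set `|x - y| | y in A].

Definition dini_lower (R : realType) (X E : normedModType R)
  (phi : R -> X -> (R -> E) -> X) (V : X -> R) (x : X) (d : R -> E) : \bar R :=
  ereal_sup [set ereal_inf [set ((V (phi t x d) - V x) / t)%:E | t in `]0, delta[]
            | delta in `]0, +oo[].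

Definition noncoercive_lyapunov (R : realType) (X E : normedModType R)
  (Dcal : set (R -> E)) (phi : R -> X -> (R -> E) -> X) (A : set X) (V : X -> R) : Prop :=
  continuous V /\ (forall x, 0 <= V x) /\ (forall x, A x -> V x = 0) /\
  exists (psi2 : R -> R) (alpha : R -> R),
    (* psi2 in K_infinity *)
    {within `[0, +oo[, continuous psi2} /\ psi2 0 = 0 /\
    {in `[0, +oo[ &, {mono psi2 : a b / a < b}} /\
    (forall M : R, exists r, 0 <= r /\ M < psi2 r) /\
    (* alpha in K *)
    {within `[0, +oo[, continuous alpha} /\ alpha 0 = 0 /\
    {in `[0, +oo[ &, {mono alpha : a b / a < b}} /\
    (forall x, ~ A x -> 0 < V x /\ V x <= psi2 (dist_set A x)) /\
    (forall x d, ~ A x -> Dcal d ->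
       (dini_lower phi V x d <= (- alpha (dist_set A x))%:E)%E).

Definition UGWA (R : realType) (X E : normedModType R)
  (Dcal : set (R -> E)) (phi : R -> X -> (R -> E) -> X) (A : set X) : Prop :=
  forall eps r : R, 0 < eps -> 0 < r -> exists tau : R,
    forall x d, dist_set A x <= r -> Dcal d ->
      exists t, 0 <= t <= tau /\ dist_set A (phi t x d) <= eps.

(* Main.v *)
Require Import Defs.
From HB Require Import structures.
From mathcomp Require Import all_boot all_order all_algebra.
Set Warnings "-all".
From mathcomp Require Import all_classical all_reals all_analysis.
From mathcomp Require Import lra.
From mathcomp Require Import ring.
Import Order.TTheory GRing.Theory Num.Theory.
Import numFieldNormedType.Exports.
Local Open Scope classical_set_scope.
Local Open Scope ring_scope.

Lemma key (R : realType) (w : R -> R) (c tau : R) :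
  0 < c -> 0 <= tau ->
  (forall s e, 0 <= s -> 0 < e -> exists2 del : R, 0 < del &
     forall t, 0 <= t -> `|s - t| < del -> `|w s - w t| < e) ->
  (forall s, 0 <= s -> s < tau -> forall del, 0 < del ->
     exists u, 0 < u < del /\ (w (s + u) - w s) / u < - c) ->
  w tau + c / 2 * tau <= w 0.
Proof.
move=> c0 tau0 hc hd.
pose g t := w t + c / 2 * t - w 0.
rewrite leNgt; apply/negP => gtau.
have gtau' : 0 < g tau by rewrite /g; lra.
pose S := [set t | 0 <= t <= tau /\ g t <= 0].
have S0 : S 0 by rewrite /S /g /= lexx tau0 mulr0 addr0 subrr.
have ubS : ubound S tau by move=> t [/andP[_ ->]].
have hsS : has_sup S by split; [exists 0 | exists tau].
set s := sup S.
have s0 : 0 <= s by by apply: (ub_le_sup (ex_intro _ tau ubS)).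
have stau : s <= tau by apply: ge_sup => //; exists 0.
have gs : g s <= 0.
  rewrite leNgt; apply/negP => gs0.
  have [del del0 Hdel] := hc s (g s / 2) s0 (divr_gt0 gs0 (ltr0Sn _ 1)).
  pose eps := Num.min del (g s / c).
  have eps0 : 0 < eps by rewrite lt_min del0 divr_gt0.
  have [t [/andP[t0 ttau] gt] st] := sup_adherent eps0 hsS.
  have ts : t <= s by apply: (ub_le_sup (ex_intro _ tau ubS)) => //; split => //; apply/andP.
  have h1 : `|s - t| < del.
    rewrite ger0_norm ?subr_ge0 //.
    have : eps <= del by rewrite ge_min lexx.
    rewrite -/s in st; lra.
  have h2 : (s - t) < g s / c.
    have : eps <= g s / c by rewrite ge_min lexx orbT.
    rewrite -/s in st; lra.
  have := Hdel t t0 h1; rewrite ltr_norml => /andP[h3 h4].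
  have h5 : c * (s - t) < g s by rewrite -ltr_pdivlMl // mulrC.
  move: gt gs0 h3 h4 h5; rewrite /g; nra.
have stau' : s < tau.
  rewrite lt_neqAle stau andbT; apply/negP => /eqP est.
  by move: gs; rewrite est leNgt gtau'.
have [u [/andP[u0 uts] hq]] := hd s s0 stau' (tau - s) (ltac:(by rewrite subr_gt0)).
rewrite ltr_pdivrMr // in hq.
have gsu : 0 < g (s + u).
  rewrite ltNge; apply/negP => gsu.
  have : s + u <= s by apply: (ub_le_sup (ex_intro _ tau ubS)) => //; split => //; apply/andP; split; lra.
  lra.
move: gs gsu hq; rewrite /g; nra.
Qed.
Lemma wcont (R : realType) (X : normedModType R) (f : R -> X) (V : X -> R) s e :
  {within `[0, +oo[, continuous f} -> continuous V -> 0 <= s -> 0 < e ->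
  exists2 del : R, 0 < del & forall t, 0 <= t -> `|s - t| < del -> `|V (f s) - V (f t)| < e.
Proof.
move=> /subspace_continuousP hf hV s0 e0.
have s0' : `[0, +oo[%classic s by rewrite /= in_itv /= andbT.
have := cvg_comp _ _ (hf s s0') (hV (f s)).
move=> /cvgrPdist_lt /(_ e e0).
idtac => /nbhs_ballP [del del0 H].
exists del => // t t0 st.
apply: (H t).
  by rewrite /ball /= st.
by rewrite /= in_itv /= andbT.
Qed.

Lemma dist_ge0 (R : realType) (X : normedModType R) (A : set X) x : 0 <= dist_set A x.
Proof.
rewrite /dist_set.
have [->|/set0P[y Ay]] := eqVneq A set0.
  by rewrite image_set0 inf0.
apply: lb_le_inf; first by exists `|x - y|; exists y.
by move=> _ [z _ <-].
Qed.

Lemma dist_in (R : realType) (X : normedModType R) (A : set X) x : A x -> dist_set A x <= 0.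
Proof.
move=> Ax; rewrite /dist_set.
have -> : 0 = `|x - x| :> R by rewrite subrr normr0.
apply: (ge_inf _); last by exists x.
by exists 0 => _ [z _ <-].
Qed.

Theorem proposition25 (R : realType) (X E : normedModType R)
  (Dset : set E) (Dcal : set (R -> E)) (phi : R -> X -> (R -> E) -> X)
  (A : set X) :
  is_system Dset Dcal phi ->
  bounded_set A ->
  (exists V : X -> R, noncoercive_lyapunov Dcal phi A V) ->
  UGWA Dcal phi A.
Proof.
move=> [_ [_ [_ [hshift [_ [hid [_ [hcont hcoc]]]]]]]] _.
move=> [V [Vc [V0 [VA [psi2 [alpha [_ [p0 [pm [_ [_ [a0 [am [hVpsi hdini]]]]]]]]]]]]]].
move=> eps r eps0 r0.
have inI : forall z : R, 0 <= z -> z \in `[0, +oo[ by move=> z z0; rewrite in_itv /= z0.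
have apos : 0 < alpha eps.
  by rewrite -a0 (am 0 eps (inI _ (lexx 0)) (inI _ (ltW eps0))).
have prpos : 0 < psi2 r.
  by rewrite -p0 (pm 0 r (inI _ (lexx 0)) (inI _ (ltW r0))).
set a := alpha eps in apos.
set pr := psi2 r in prpos.
exists (4 * pr / a + 1).
set tau := 4 * pr / a + 1.
have tau0 : 0 <= tau by rewrite /tau addr_ge0 // ltW // divr_gt0 // mulr_gt0.
move=> x d dx dD.
have [//|Hno] := pselect (exists t, 0 <= t <= tau /\ dist_set A (phi t x d) <= eps).
exfalso.
have Hall : forall t, 0 <= t -> t <= tau -> eps < dist_set A (phi t x d).
  move=> t t0 tt; rewrite ltNge; apply/negP => h; apply: Hno; exists t.
  by rewrite t0 tt.
have nA : forall t, 0 <= t -> t <= tau -> ~ A (phi t x d).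
  move=> t t0 tt /dist_in h; have := Hall t t0 tt; lra.
have a20 : 0 < a / 2 by apply: divr_gt0.
have hk : V (phi tau x d) + a / 2 / 2 * tau <= V (phi 0 x d).
  apply: (@key R (fun t => V (phi t x d)) (a / 2) tau a20 tau0).
- move=> s e s0 e0; exact: wcont (hcont x d dD) Vc s0 e0.
- move=> s s0 stau del del0.
  set y := phi s x d.
  have Dd' : Dcal (fun u => d (s + u)).
    have -> : (fun u => d (s + u)) = (fun u => d (u + s)).
      by apply: funext => u; rewrite addrC.
    exact: hshift.
  have nAy : ~ A y by apply: nA => //; exact: ltW.
  have hD := hdini y _ nAy Dd'.
  have dy0 := @dist_ge0 R X A y.
  have ay : a < alpha (dist_set A y).
    by rewrite /a (am eps _ (inI _ (ltW eps0)) (inI _ dy0)); apply: Hall => //; exact: ltW.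
  pose S' := [set ((V (phi t y (fun u => d (s + u))) - V y) / t)%:E | t in `]0, del[].
  have : (ereal_inf S' < (- (a / 2))%:E)%E.
    apply: (le_lt_trans _ (le_lt_trans hD _)).
      apply: ereal_sup_ubound; exists del => //; rewrite /= in_itv /= del0 //.
    rewrite lte_fin; lra.
  move=> /ereal_inf_lt [_ [u uin <-]]; rewrite lte_fin => hu.
  move: uin; rewrite /= in_itv /= => /andP[u0 udel].
  exists u; split; first by rewrite u0 udel.
  by rewrite /y hcoc // in hu; exact: ltW.
move: hk; rewrite hid // => hk.
have Vxle : V x <= pr.
  have nAx : ~ A x by have := nA 0 (lexx 0) tau0; rewrite hid.
  have [_ h] := hVpsi x nAx.
  apply: (le_trans h); rewrite leNgt.
  by rewrite (pm r _ (inI _ (ltW r0)) (inI _ (@dist_ge0 R X A x))) -leNgt.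
have Vt := V0 (phi tau x d).
have htau : a / 2 / 2 * tau = pr + a / 4.
  rewrite /tau; field; lra.
lra.
Qed.
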